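(* Let $a>0$ with $2a/\sqrt{3}<\pi/2$, let $\Delta$, $h$ and $D_p$ be as below, fix $p\in\Delta$, and let $P:\mathbb{R}^3\to D_p$ be the Euclidean nearest-point projection onto $D_p$. For every piecewise smooth curve $\gamma$ in $\mathbb{R}^3$, setting $\gamma'=P\circ\gamma$, one has $l_h(\gamma)\ge l_h(\gamma')$.
   Context: $\Delta\subset\mathbb{R}^2$ is the hexagonal lattice generated by $(2a,0)$ and $(a,a\sqrt3)$; for $p\in\Delta$, $V_p$ is its closed Voronoi cell (a regular hexagon centered at $p$ with inradius $a$), and $D_p=V_p\times\mathbb{R}\subset\mathbb{R}^3$ is the corresponding vertical hexagonal prism (a convex set, so the nearest-point projection is well defined). $h$ is the continuous Riemannian metric $dx^2+dy^2+\cos^2\!\big(\mathrm{dist}((x,y),\Delta)\big)\,dz^2$ on $\mathbb{R}^3$, $\mathrm{dist}$ the Euclidean distance in $\mathbb{R}^2$, and $l_h(\gamma)=\int (h(\gamma',\gamma'))^{1/2}dt$ is the $h$-length. $(\mathbb{R}^3,h)$ is the universal Riemannian cover of the quotient torus $(\mathbb{R}^3,h)/(2\Delta\times2\pi\mathbb{Z})$. *)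

(* Defs.v *)
From HB Require Import structures.
From mathcomp Require Import all_boot all_order all_algebra.
From mathcomp Require Import all_classical all_reals all_analysis.
Set Implicit Arguments. Unset Strict Implicit. Unset Printing Implicit Defensive.
Import Order.TTheory GRing.Theory Num.Theory.
Import numFieldNormedType.Exports.
Local Open Scope classical_set_scope.
Local Open Scope ring_scope.

Section Defs.
Variable R : realType.

Definition pt2 := (R * R)%type.
Definition pt3 := (R * R * R)%type.
Definition px (q : pt3) : R := q.1.1.
Definition py (q : pt3) : R := q.1.2.
Definition pz (q : pt3) : R := q.2.
Definition hor (q : pt3) : pt2 := q.1.

Definition sqd2 (u v : pt2) : R := (u.1 - v.1) ^+ 2 + (u.2 - v.2) ^+ 2.
Definition sqd3 (u v : pt3) : R :=
  (px u - px v) ^+ 2 + (py u - py v) ^+ 2 + (pz u - pz v) ^+ 2.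

Definition hexlat (a : R) : set pt2 :=
  [set q | exists m n : int,
     q = (m%:~R * (2 * a) + n%:~R * a, n%:~R * (a * Num.sqrt 3))].

Definition dist_lat (a : R) (q : pt2) : R :=
  inf [set d | exists l, hexlat a l /\ d = Num.sqrt (sqd2 q l)].

Definition voronoi (a : R) (p : pt2) : set pt2 :=
  [set q | forall l, hexlat a l -> sqd2 q p <= sqd2 q l].

Definition prism (a : R) (p : pt2) : set pt3 := [set q | voronoi a p (hor q)].

Definition hmetric (a : R) (q v : pt3) : R :=
  px v ^+ 2 + py v ^+ 2 + (cos (dist_lat a (hor q))) ^+ 2 * pz v ^+ 2.

Definition cderivable (c : R -> pt3) (t : R) : Prop :=
  [/\ derivable (px \o c) t 1, derivable (py \o c) t 1 & derivable (pz \o c) t 1].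
Definition cderive (c : R -> pt3) (t : R) : pt3 :=
  ('D_1 (px \o c) t, 'D_1 (py \o c) t, 'D_1 (pz \o c) t).

Definition C1curve (g : R -> pt3) : Prop :=
  (forall t, cderivable g t) /\
  [/\ continuous (fun t => 'D_1 (px \o g) t),
      continuous (fun t => 'D_1 (py \o g) t) &
      continuous (fun t => 'D_1 (pz \o g) t)].

Definition piecewise_smooth (c : R -> pt3) (t0 t1 : R) : Prop :=
  exists (n : nat) (s : nat -> R),
    [/\ s 0%N = t0, s n = t1,
        (forall i, (i < n)%N -> s i < s i.+1) &
        (forall i, (i < n)%N -> exists g, C1curve g /\
            (forall t, s i <= t <= s i.+1 -> c t = g t))].

(* speed of a curve w.r.t. h: sqrt(h(c',c')) where c is differentiable,
   0 elsewhere (a null set for the curves considered) *)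
Definition hspeed (a : R) (c : R -> pt3) (t : R) : R :=
  if `[< cderivable c t >] then Num.sqrt (hmetric a (c t) (cderive c t)) else 0.

Definition hlength (a : R) (c : R -> pt3) (t0 t1 : R) : \bar R :=
  (\int[@lebesgue_measure R]_(t in `[t0, t1]) (hspeed a c t)%:E)%E.

Definition nearest_proj (D : set pt3) (P : pt3 -> pt3) : Prop :=
  forall x, D (P x) /\ (forall y, D y -> sqd3 x (P x) <= sqd3 x y).

End Defs.

(* Main.v *)
Require Import Defs.
From HB Require Import structures.
From mathcomp Require Import all_boot all_order all_algebra.
From mathcomp Require Import all_classical all_reals all_analysis.
From mathcomp Require Import ring lra measurable_realfun zify.
Import Order.TTheory GRing.Theory Num.Theory.
Import numFieldNormedType.Exports.
Local Open Scope classical_set_scope.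
Local Open Scope ring_scope.
Import HBNNSimple.
Lemma int_le_exc (R : realType) (D : set R) (N : set R) (f g : R -> R) :
  measurable N -> lebesgue_measure N = 0%E ->
  (forall x, D x -> 0 <= f x) -> (forall x, D x -> 0 <= g x) ->
  (forall x, D x -> ~ N x -> f x <= g x) ->
  (\int[@lebesgue_measure R]_(x in D) (f x)%:E <=
   \int[@lebesgue_measure R]_(x in D) (g x)%:E)%E.
Proof.
move=> mN N0 f0 g0 fg.
rewrite !ge0_integralE; last 2 first.
- by move=> x Dx; rewrite lee_fin g0.
- by move=> x Dx; rewrite lee_fin f0.
apply: ge_ereal_sup => _ [h /= hf] <-.
have mNc : measurable (~` N) by exact: measurableC.
have -> : sintegral lebesgue_measure h =
   (\int[@lebesgue_measure R]_(x in setT) (h x)%:E)%E by rewrite integralT_nnsfun.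
rewrite (ge0_negligible_integral _ _ _ _ N0) //; last 2 first.
- by apply/measurable_EFinP; exact: measurable_funTS.
- by move=> x _; rewrite lee_fin.
have mTN : measurable (setT `\` N) by exact: measurableD.
rewrite integral_nnsfun // (mrestrict h mTN).
apply: ereal_sup_ubound => /=; exists (proj_nnsfun h mTN) => // x /=.
rewrite mindicE /patch.
have := hf x; rewrite /patch.
case: ifPn => [/set_mem xD|_] hx.
  case: (boolP (x \in _)) => [/set_mem [_ /= nNx]|_]; last by rewrite mulr0 lee_fin g0.
  by rewrite mulr1 (le_trans hx) // lee_fin fg.
have h0 : (0 <= h x)%R by [].
move: hx; rewrite /point /=.
rewrite !lee_fin => hx0; have -> : h x = 0 by apply/le_anti; rewrite hx0 h0.
by rewrite mul0r.
Qed.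

Lemma deriv_sq_le (R : realType) (f1 f2 g1 g2 : R -> R) (t : R) :
  derivable f1 t 1 -> derivable f2 t 1 -> derivable g1 t 1 -> derivable g2 t 1 ->
  (forall u, (f1 u - f1 t) ^+ 2 + (f2 u - f2 t) ^+ 2 <=
             (g1 u - g1 t) ^+ 2 + (g2 u - g2 t) ^+ 2) ->
  'D_1 f1 t ^+ 2 + 'D_1 f2 t ^+ 2 <= 'D_1 g1 t ^+ 2 + 'D_1 g2 t ^+ 2.
Proof.
move=> d1 d2 d3 d4 H.
set q := fun (f : R -> R) (h : R) => h^-1 *: ((f \o shift t) (h *: 1) - f t).
have c1 : q f1 @ 0^' --> 'D_1 f1 t := d1.
have c2 : q f2 @ 0^' --> 'D_1 f2 t := d2.
have c3 : q g1 @ 0^' --> 'D_1 g1 t := d3.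
have c4 : q g2 @ 0^' --> 'D_1 g2 t := d4.
rewrite -subr_ge0 !expr2.
apply: (@cvgr_to_ge _ (0^' : set_system R) _ _ (fun h => (q g1 h * q g1 h + q g2 h * q g2 h) - (q f1 h * q f1 h + q f2 h * q f2 h))).
  apply: cvgB; apply: cvgD; apply: cvgM => //.
near=> h.
rewrite subr_ge0 /q /= !scaler1 -!mulrA.
have := H (h + t). rewrite !expr2.
rewrite /GRing.scale /= => Hh.
set k := h^-1.
have k2 : 0 <= k * k by rewrite -expr2 sqr_ge0.
nra.
Unshelve. all: by end_near. Qed.

Lemma round_lemma (R : realType) (c1 c2 A B : R) :
  0 <= c1 -> 0 <= c2 -> A <= 1 -> B <= 1 -> c1 + c2 <= c1 * A + c2 * B ->
  exists K1 K2 : int,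
    (c1 - K1%:~R) * A + (c2 - K2%:~R) * B + (c1 - K1%:~R) ^+ 2
    + (c2 - K2%:~R) ^+ 2 + (c1 - K1%:~R) * (c2 - K2%:~R) <= 0.
Proof.
move=> c10 c20 A1 B1 H.
set k1 := Num.floor c1; set k2 := Num.floor c2.
have k1l : k1%:~R <= c1 by exact: Num.Theory.floor_le.
have k2l : k2%:~R <= c2 by exact: Num.Theory.floor_le.
have k1u : c1 < k1%:~R + 1 by rewrite -(intrD _ k1 1); exact: Num.Theory.floorD1_gt.
have k2u : c2 < k2%:~R + 1 by rewrite -(intrD _ k2 1); exact: Num.Theory.floorD1_gt.
have k10 : 0 <= k1%:~R :> R by rewrite ler0z Num.Theory.floor_ge_int.
have k20 : 0 <= k2%:~R :> R by rewrite ler0z Num.Theory.floor_ge_int.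
set f1 := c1 - k1%:~R; set f2 := c2 - k2%:~R.
have f10 : 0 <= f1 by rewrite /f1; lra.
have f20 : 0 <= f2 by rewrite /f2; lra.
have f11 : f1 < 1 by rewrite /f1; lra.
have f21 : f2 < 1 by rewrite /f2; lra.
have c1f : f1 <= c1 by rewrite /f1; lra.
have c2f : f2 <= c2 by rewrite /f2; lra.
have eA : 0 < c1 -> A = 1.
  move=> c1p; apply/le_anti; rewrite A1 /=.
  have hB : 0 <= 1 - B by lra.
  have h1 := mulr_ge0 c20 hB.
  rewrite leNgt; apply/negP => A1'.
  have hA : 0 < 1 - A by lra.
  have := mulr_gt0 c1p hA. nra.
have eB : 0 < c2 -> B = 1.
  move=> c2p; apply/le_anti; rewrite B1 /=.
  have hA : 0 <= 1 - A by lra.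
  have h1 := mulr_ge0 c10 hA.
  rewrite leNgt; apply/negP => B1'.
  have hB : 0 < 1 - B by lra.
  have := mulr_gt0 c2p hB. nra.
have [/andP[/eqP f1z /eqP f2z]|nz] := boolP ((f1 == 0) && (f2 == 0)).
  by exists k1, k2; rewrite -/f1 -/f2 f1z f2z; lra.
have [/andP[b1 b2]|nb] := boolP ((1 <= f1 + 2 * f2) && (1 <= 2 * f1 + f2)).
  exists (k1 + 1), (k2 + 1); rewrite !intrD.
  have -> : c1 - (k1%:~R + 1%:~R) = f1 - 1 by rewrite /f1; lra.
  have -> : c2 - (k2%:~R + 1%:~R) = f2 - 1 by rewrite /f2; lra.
  rewrite (eA _) ?(eB _); try lra.
  nra.
have [f12|f21'] := lerP f1 f2.
  have f2p : 0 < f2.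
    rewrite lt_neqAle f20 andbT eq_sym; apply/negP => /eqP f2z.
    move: nz; rewrite f2z eqxx andbT => /negP; apply; apply/eqP; lra.
  have b : 2 * f1 + f2 < 1.
    rewrite ltNge; apply/negP => hb; move: nb; rewrite hb andbT.
    by move=> /negP; apply; lra.
  exists k1, (k2 + 1); rewrite !intrD.
  have -> : c2 - (k2%:~R + 1%:~R) = f2 - 1 by rewrite /f2; lra.
  rewrite -/f1 (eB _); last lra.
  nra.
have f1p : 0 < f1 by lra.
have b : f1 + 2 * f2 < 1.
  rewrite ltNge; apply/negP => hb; move: nb; rewrite hb /=.
  by move=> /negP; apply; lra.
exists (k1 + 1), k2; rewrite !intrD.
have -> : c1 - (k1%:~R + 1%:~R) = f1 - 1 by rewrite /f1; lra.
rewrite -/f2 (eA _); last lra.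
nra.
Qed.

Definition Qf {R : realType} (x y : R) := x ^+ 2 + x * y + y ^+ 2.
Definition Bf {R : realType} (x1 y1 x2 y2 : R) :=
  2 * x1 * x2 + x1 * y2 + y1 * x2 + 2 * y1 * y2.

Lemma sector_lemma (R : realType) (w1 w2 x1 x2 i1 j1 i2 j2 c1 c2 : R) :
  Qf i1 j1 = 1 -> Qf i2 j2 = 1 -> Bf i1 j1 i2 j2 = 1 ->
  0 <= c1 -> 0 <= c2 ->
  x1 = w1 + (c1 * i1 + c2 * i2) -> x2 = w2 + (c1 * j1 + c2 * j2) ->
  Bf w1 w2 i1 j1 <= 1 -> Bf w1 w2 i2 j2 <= 1 ->
  Bf (x1 - w1) (x2 - w2) ((i1 + i2) / 3 - w1) ((j1 + j2) / 3 - w2) <= 0 ->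
  exists K1 K2 : int,
    Qf (x1 - (K1%:~R * i1 + K2%:~R * i2)) (x2 - (K1%:~R * j1 + K2%:~R * j2))
    <= Qf w1 w2.
Proof.
move=> Q1 Q2 B12 c10 c20 -> -> A1 B1 V.
have := @round_lemma R c1 c2 (Bf w1 w2 i1 j1) (Bf w1 w2 i2 j2) c10 c20 A1 B1.
case.
  have E : Bf (w1 + (c1 * i1 + c2 * i2) - w1) (w2 + (c1 * j1 + c2 * j2) - w2)
      ((i1 + i2) / 3 - w1) ((j1 + j2) / 3 - w2) =
    c1 * ((2 * Qf i1 j1 + Bf i1 j1 i2 j2) / 3) +
    c2 * ((Bf i1 j1 i2 j2 + 2 * Qf i2 j2) / 3) -
    (c1 * Bf w1 w2 i1 j1 + c2 * Bf w1 w2 i2 j2).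
    by rewrite /Bf /Qf; field.
  move: V; rewrite E Q1 Q2 B12.
  lra.
move=> K1 [K2 HK]; exists K1, K2.
set e1 := c1 - K1%:~R; set e2 := c2 - K2%:~R.
have E : Qf (w1 + (c1 * i1 + c2 * i2) - (K1%:~R * i1 + K2%:~R * i2))
    (w2 + (c1 * j1 + c2 * j2) - (K1%:~R * j1 + K2%:~R * j2)) =
  Qf w1 w2 + e1 * Bf w1 w2 i1 j1 + e2 * Bf w1 w2 i2 j2 +
  e1 ^+ 2 * Qf i1 j1 + e2 ^+ 2 * Qf i2 j2 + e1 * e2 * Bf i1 j1 i2 j2.
  by rewrite /e1 /e2 /Qf /Bf; ring.
rewrite E Q1 Q2 B12 !mulr1.
move: HK; rewrite -/e1 -/e2 => HK; lra.
Qed.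
Lemma kk1 (k : int) : (0 <= k * (k - 1))%R.
Proof. case: (lerP k 0) => h; nia. Qed.
Lemma kk2 (k : int) : (0 <= k * (k + 1))%R.
Proof. case: (lerP k (-1)) => h; nia. Qed.
Lemma vq (m n : int) : ((m + n <= m * m + m * n + n * n)%R /\ (- m - n <= m * m + m * n + n * n)%R) /\
  ((m <= m * m + m * n + n * n)%R /\ (- m <= m * m + m * n + n * n)%R) /\
  ((n <= m * m + m * n + n * n)%R /\ (- n <= m * m + m * n + n * n)%R).
Proof.
have := kk1 m; have := kk2 m; have := kk1 n; have := kk2 n;
have := kk1 (m + n); have := kk2 (m + n).
move=> *; split; [split|split; split]; nia.
Qed.

Lemma sector2 (R : realType) (i1 j1 i2 j2 : int) (w1 w2 x1 x2 c1 c2 : R) :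
  (i1 * i1 + i1 * j1 + j1 * j1 = 1)%R ->
  (i2 * i2 + i2 * j2 + j2 * j2 = 1)%R ->
  (2 * i1 * i2 + i1 * j2 + j1 * i2 + 2 * j1 * j2 = 1)%R ->
  (forall m n : int, 2 * (i1 + i2) * m + (i1 + i2) * n + (j1 + j2) * m
     + 2 * (j1 + j2) * n <= 3 * (m * m + m * n + n * n))%R ->
  0 <= c1 -> 0 <= c2 ->
  x1 = w1 + (c1 * i1%:~R + c2 * i2%:~R) -> x2 = w2 + (c1 * j1%:~R + c2 * j2%:~R) ->
  (forall m n : int, Qf w1 w2 <= Qf (w1 - m%:~R) (w2 - n%:~R)) ->
  (forall z1 z2 : R, (forall m n : int, Qf z1 z2 <= Qf (z1 - m%:~R) (z2 - n%:~R)) ->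
     Bf (x1 - w1) (x2 - w2) (z1 - w1) (z2 - w2) <= 0) ->
  exists m n : int, Qf (x1 - m%:~R) (x2 - n%:~R) <= Qf w1 w2.
Proof.
move=> Q1 Q2 B12 HV c10 c20 ex1 ex2 Vw Var.
have Q1r : Qf (i1%:~R : R) j1%:~R = 1.
  by rewrite /Qf !expr2 -!intrM -!intrD Q1.
have Q2r : Qf (i2%:~R : R) j2%:~R = 1.
  by rewrite /Qf !expr2 -!intrM -!intrD Q2.
have B12r : Bf (i1%:~R : R) j1%:~R i2%:~R j2%:~R = 1.
  have h := congr1 (fun z : int => (z%:~R : R)) B12; rewrite !intrD !intrM /= in h.
  have e1 : (1%:~R : R) = 1 by [].
  rewrite e1 in h; rewrite /Bf; apply: (eq_trans _ h); ring.
have QBe : forall u1 u2 v1 v2 : R, Qf (u1 - v1) (u2 - v2) =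
    Qf u1 u2 - Bf u1 u2 v1 v2 + Qf v1 v2.
  by move=> *; rewrite /Qf /Bf; ring.
have A1 : Bf w1 w2 i1%:~R j1%:~R <= 1.
  by have := Vw i1 j1; rewrite QBe Q1r; lra.
have B1 : Bf w1 w2 i2%:~R j2%:~R <= 1.
  by have := Vw i2 j2; rewrite QBe Q2r; lra.
have VV := Var ((i1%:~R + i2%:~R) / 3) ((j1%:~R + j2%:~R) / 3).
have := @sector_lemma R _ _ _ _ _ _ _ _ _ _ Q1r Q2r B12r c10 c20 ex1 ex2 A1 B1.
case.
  apply: VV => m n.
  rewrite QBe.
  have := HV m n; rewrite -(ler_int R) !intrD !intrM.
  rewrite /Bf /Qf; lra.
move=> K1 [K2 HK]; exists (K1 * i1 + K2 * i2)%R, (K1 * j1 + K2 * j2)%R.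
by rewrite !intrD !intrM.
Qed.

Lemma coord_main (R : realType) (w1 w2 x1 x2 : R) :
  (forall m n : int, Qf w1 w2 <= Qf (w1 - m%:~R) (w2 - n%:~R)) ->
  (forall z1 z2 : R, (forall m n : int, Qf z1 z2 <= Qf (z1 - m%:~R) (z2 - n%:~R)) ->
     Bf (x1 - w1) (x2 - w2) (z1 - w1) (z2 - w2) <= 0) ->
  exists m n : int, Qf (x1 - m%:~R) (x2 - n%:~R) <= Qf w1 w2.
Proof.
move=> Vw Var.
have c0 : (0%:~R : R) = 0 by [].
have c1 : (1%:~R : R) = 1 by [].
have cm1 : ((-1 : int)%:~R : R) = -1 by rewrite intrN.
have [d1p|d1n] := lerP 0 (x1 - w1); have [d2p|d2n] := lerP 0 (x2 - w2).
- apply: (@sector2 R 1 0 0 1 w1 w2 x1 x2 (x1 - w1) (x2 - w2)) => //;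
    try (move=> m n; have := vq m n; nia); rewrite ?c0 ?c1 ?cm1; lra.
- have [s|s] := lerP 0 (x1 - w1 + (x2 - w2)).
  + apply: (@sector2 R 1 (-1) 1 0 w1 w2 x1 x2 (w2 - x2) (x1 - w1 + (x2 - w2))) => //;
      try (move=> m n; have := vq m n; nia); rewrite ?c0 ?c1 ?cm1; lra.
  + apply: (@sector2 R 0 (-1) 1 (-1) w1 w2 x1 x2 (w1 - x1 - (x2 - w2)) (x1 - w1)) => //;
      try (move=> m n; have := vq m n; nia); rewrite ?c0 ?c1 ?cm1; lra.
- have [s|s] := lerP 0 (x1 - w1 + (x2 - w2)).
  + apply: (@sector2 R 0 1 (-1) 1 w1 w2 x1 x2 (x1 - w1 + (x2 - w2)) (w1 - x1)) => //;
      try (move=> m n; have := vq m n; nia); rewrite ?c0 ?c1 ?cm1; lra.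
  + apply: (@sector2 R (-1) 1 (-1) 0 w1 w2 x1 x2 (x2 - w2) (w1 - x1 - (x2 - w2))) => //;
      try (move=> m n; have := vq m n; nia); rewrite ?c0 ?c1 ?cm1; lra.
- apply: (@sector2 R (-1) 0 0 (-1) w1 w2 x1 x2 (w1 - x1) (w2 - x2)) => //;
    try (move=> m n; have := vq m n; nia); rewrite ?c0 ?c1 ?cm1; lra.
Qed.

Lemma hex_bound (R : realType) (w1 w2 : R) :
  (forall m n : int, Qf w1 w2 <= Qf (w1 - m%:~R) (w2 - n%:~R)) ->
  Qf w1 w2 <= 1 / 3.
Proof.
move=> Vw.
have c0 : (0%:~R : R) = 0 by [].
have c1 : (1%:~R : R) = 1 by [].
have cm1 : ((-1 : int)%:~R : R) = -1 by rewrite intrN.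
have := Vw 1 0; have := Vw (-1) 0; have := Vw 0 1; have := Vw 0 (-1);
have := Vw 1 (-1); have := Vw (-1) 1.
move=> h1 h2 h3 h4 h5 h6; rewrite /Qf ?c0 ?c1 ?cm1 in h1 h2 h3 h4 h5 h6.
have e1 : 2 * w1 + w2 <= 1 by nra.
have e2 : - 1 <= 2 * w1 + w2 by nra.
have e3 : w1 + 2 * w2 <= 1 by nra.
have e4 : - 1 <= w1 + 2 * w2 by nra.
have e5 : w1 - w2 <= 1 by nra.
have e6 : - 1 <= w1 - w2 by nra.
have E : Qf w1 w2 = ((2 * w1 + w2) ^+ 2 - (2 * w1 + w2) * (w1 + 2 * w2) + (w1 + 2 * w2) ^+ 2) / 3.
  by rewrite /Qf; field.
rewrite E; set u := 2 * w1 + w2; set v := w1 + 2 * w2.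
have uv : u - v = w1 - w2 by rewrite /u /v; ring.
rewrite ler_pdivrMr // mul1r; rewrite -/u -/v in e1 e2 e3 e4.
rewrite -uv in e5 e6.
have [u0|u0] := lerP 0 u; have [v0|v0] := lerP 0 v; nra.
Qed.
Definition rt3 {R : realType} : R := Num.sqrt 3.
Definition cy {R : realType} (a : R) (p u : pt2 R) : R := (u.2 - p.2) / (a * rt3).
Definition cx {R : realType} (a : R) (p u : pt2 R) : R :=
  (u.1 - p.1 - cy a p u * a) / (2 * a).
Definition ptc {R : realType} (a : R) (p : pt2 R) (x y : R) : pt2 R :=
  (p.1 + x * (2 * a) + y * a, p.2 + y * (a * rt3)).

Lemma rt3_sq {R : realType} : (rt3 : R) ^+ 2 = 3.
Proof. by rewrite /rt3 sqr_sqrtr // ler0n. Qed.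
Lemma rt3_gt0 {R : realType} : 0 < (rt3 : R).
Proof. by rewrite /rt3 sqrtr_gt0 ltr0n. Qed.

Lemma coord1 {R : realType} (a : R) (p u : pt2 R) : 0 < a ->
  u.1 = p.1 + cx a p u * (2 * a) + cy a p u * a.
Proof.
move=> a0; have r0 := @rt3_gt0 R.
rewrite /cx /cy; field; rewrite ?mulf_neq0 ?gt_eqF //.
Qed.
Lemma coord2 {R : realType} (a : R) (p u : pt2 R) : 0 < a ->
  u.2 = p.2 + cy a p u * (a * rt3).
Proof.
move=> a0; have r0 := @rt3_gt0 R.
rewrite /cy; field; rewrite ?mulf_neq0 ?gt_eqF //.
Qed.
Lemma cx_ptc {R : realType} (a : R) (p : pt2 R) x y : 0 < a -> cx a p (ptc a p x y) = x.
Proof.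
move=> a0; have r0 := @rt3_gt0 R.
rewrite /cx /cy /ptc /=; field; rewrite ?mulf_neq0 ?gt_eqF //.
Qed.
Lemma cy_ptc {R : realType} (a : R) (p : pt2 R) x y : 0 < a -> cy a p (ptc a p x y) = y.
Proof.
move=> a0; have r0 := @rt3_gt0 R.
rewrite /cy /ptc /=; field; rewrite ?mulf_neq0 ?gt_eqF //.
Qed.

Lemma sqd2_coord {R : realType} (a : R) (p u v : pt2 R) : 0 < a ->
  sqd2 u v = 4 * a ^+ 2 * Qf (cx a p u - cx a p v) (cy a p u - cy a p v).
Proof.
move=> a0; rewrite /sqd2 (coord1 a p u a0) (coord2 a p u a0) (coord1 a p v a0) (coord2 a p v a0).
set X1 := cx a p u; set X2 := cx a p v; set Y1 := cy a p u; set Y2 := cy a p v.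
have h : (rt3 : R) ^+ 2 = 3 := rt3_sq.
rewrite /Qf.
have E : (p.2 + Y1 * (a * rt3) - (p.2 + Y2 * (a * rt3))) ^+ 2 = 3 * a ^+ 2 * (Y1 - Y2) ^+ 2.
  by rewrite -h; ring.
rewrite E; ring.
Qed.

Lemma dot_coord {R : realType} (a : R) (p u v w : pt2 R) : 0 < a ->
  (u.1 - w.1) * (v.1 - w.1) + (u.2 - w.2) * (v.2 - w.2) =
  2 * a ^+ 2 * Bf (cx a p u - cx a p w) (cy a p u - cy a p w)
                  (cx a p v - cx a p w) (cy a p v - cy a p w).
Proof.
move=> a0; rewrite (coord1 a p u a0) (coord2 a p u a0) (coord1 a p v a0) (coord2 a p v a0)
  (coord1 a p w a0) (coord2 a p w a0).
have h : (rt3 : R) ^+ 2 = 3 := rt3_sq.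
set X1 := cx a p u; set X2 := cx a p v; set X3 := cx a p w.
set Y1 := cy a p u; set Y2 := cy a p v; set Y3 := cy a p w.
have E : (p.2 + Y1 * (a * rt3) - (p.2 + Y3 * (a * rt3))) *
         (p.2 + Y2 * (a * rt3) - (p.2 + Y3 * (a * rt3))) =
         3 * a ^+ 2 * (Y1 - Y3) * (Y2 - Y3).
  by rewrite -h; ring.
rewrite E /Bf; ring.
Qed.

Lemma lat_coord {R : realType} (a : R) (p l : pt2 R) : 0 < a ->
  hexlat a p -> hexlat a l ->
  exists m n : int, cx a p l = m%:~R /\ cy a p l = n%:~R.
Proof.
move=> a0 [m0 [n0 ->]] [m [n ->]]; exists (m - m0)%R, (n - n0)%R.
have r0 := @rt3_gt0 R.
rewrite /cx /cy /= !intrB /rt3 in r0 *; split; field; rewrite ?mulf_neq0 ?gt_eqF //.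
Qed.

Lemma ptc_lat {R : realType} (a : R) (p : pt2 R) (m n : int) :
  hexlat a p -> hexlat a (ptc a p m%:~R n%:~R).
Proof.
move=> [m0 [n0 ->]]; exists (m0 + m)%R, (n0 + n)%R.
by rewrite /ptc /rt3 /= !intrD; congr pair; ring.
Qed.

Lemma cxp {R : realType} (a : R) (p : pt2 R) : cx a p p = 0.
Proof. by rewrite /cx /cy !subrr !mul0r subrr mul0r. Qed.
Lemma cyp {R : realType} (a : R) (p : pt2 R) : cy a p p = 0.
Proof. by rewrite /cy subrr mul0r. Qed.

Lemma vor_coord {R : realType} (a : R) (p w : pt2 R) : 0 < a -> hexlat a p ->
  voronoi a p w <->
  (forall m n : int, Qf (cx a p w) (cy a p w) <=
                     Qf (cx a p w - m%:~R) (cy a p w - n%:~R)).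
Proof.
move=> a0 hp; have a2 : 0 < 4 * a ^+ 2 by rewrite mulr_gt0 // exprn_gt0.
split.
- move=> V m n; have := V _ (ptc_lat a p m n hp).
  rewrite (sqd2_coord a p w p a0) (sqd2_coord a p w (ptc a p m%:~R n%:~R) a0).
  by rewrite cxp cyp cx_ptc // cy_ptc // !subr0 ler_pM2l.
- move=> H l hl; have [m [n [e1 e2]]] := lat_coord a p l a0 hp hl.
  rewrite (sqd2_coord a p w p a0) (sqd2_coord a p w l a0) cxp cyp e1 e2 !subr0 ler_pM2l //.
Qed.

Lemma proj_dist {R : realType} (a : R) (p X w : pt2 R) : 0 < a -> hexlat a p ->
  voronoi a p w ->
  (forall z, voronoi a p z -> (X.1 - w.1) * (z.1 - w.1) + (X.2 - w.2) * (z.2 - w.2) <= 0) ->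
  exists l, hexlat a l /\ sqd2 X l <= sqd2 w p.
Proof.
move=> a0 hp Vw Var.
have a2 : 0 < 2 * a ^+ 2 by rewrite mulr_gt0 // exprn_gt0.
have a4 : 0 < 4 * a ^+ 2 by rewrite mulr_gt0 // exprn_gt0.
have := @coord_main R (cx a p w) (cy a p w) (cx a p X) (cy a p X).
case.
- by apply/vor_coord.
- move=> z1 z2 Vz.
  have hz : voronoi a p (ptc a p z1 z2).
    by apply/vor_coord => //; rewrite cx_ptc // cy_ptc.
  have := Var _ hz; rewrite (dot_coord a p X (ptc a p z1 z2) w a0) cx_ptc // cy_ptc //.
  by rewrite pmulr_rle0.
move=> m [n H]; exists (ptc a p m%:~R n%:~R); split; first exact: ptc_lat.
rewrite (sqd2_coord a p X _ a0) (sqd2_coord a p w p a0) cx_ptc // cy_ptc // cxp cyp !subr0.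
by rewrite ler_pM2l.
Qed.

Lemma vor_bound {R : realType} (a : R) (p w : pt2 R) : 0 < a -> hexlat a p ->
  voronoi a p w -> sqd2 w p <= 4 * a ^+ 2 / 3.
Proof.
move=> a0 hp /(vor_coord a p w a0 hp) /hex_bound H.
rewrite (sqd2_coord a p w p a0) cxp cyp !subr0.
have a4 : 0 < 4 * a ^+ 2 by rewrite mulr_gt0 // exprn_gt0.
set q := Qf _ _ in H *; set b := 4 * a ^+ 2 in a4 *.
have H' : 0 <= 1 / 3 - q by lra.
have := mulr_ge0 (ltW a4) H'; lra.
Qed.

Lemma vor_convex {R : realType} (a : R) (p u v : pt2 R) (t : R) :
  0 <= t <= 1 -> voronoi a p u -> voronoi a p v ->
  voronoi a p ((1 - t) * u.1 + t * v.1, (1 - t) * u.2 + t * v.2).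
Proof.
move=> /andP[t0 t1] Vu Vv l hl.
have := Vu l hl; have := Vv l hl; rewrite /sqd2 /= => hv hu.
set F := fun z : pt2 R => (z.1 - p.1) ^+ 2 + (z.2 - p.2) ^+ 2 - ((z.1 - l.1) ^+ 2 + (z.2 - l.2) ^+ 2).
have E : F ((1 - t) * u.1 + t * v.1, (1 - t) * u.2 + t * v.2) = (1 - t) * F u + t * F v.
  by rewrite /F /=; ring.
have Fu : F u <= 0 by rewrite /F; lra.
have Fv : F v <= 0 by rewrite /F; lra.
have t1' : 0 <= 1 - t by lra.
have Fu' : 0 <= - F u by lra.
have Fv' : 0 <= - F v by lra.
have h1 := mulr_ge0 t1' Fu'.
have h2 := mulr_ge0 t0 Fv'.
have : F ((1 - t) * u.1 + t * v.1, (1 - t) * u.2 + t * v.2) <= 0.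
  rewrite E; nra.
rewrite /F /=; lra.
Qed.

Lemma variational {R : realType} (a : R) (p X w : pt2 R) :
  voronoi a p w -> (forall u, voronoi a p u -> sqd2 X w <= sqd2 X u) ->
  forall z, voronoi a p z ->
  (X.1 - w.1) * (z.1 - w.1) + (X.2 - w.2) * (z.2 - w.2) <= 0.
Proof.
move=> Vw Hmin z Vz.
set c := (X.1 - w.1) * (z.1 - w.1) + (X.2 - w.2) * (z.2 - w.2).
rewrite leNgt; apply/negP => c0.
set D := (z.1 - w.1) ^+ 2 + (z.2 - w.2) ^+ 2.
have CS : c ^+ 2 <= ((X.1 - w.1) ^+ 2 + (X.2 - w.2) ^+ 2) * D.
  have := sqr_ge0 ((X.1 - w.1) * (z.2 - w.2) - (X.2 - w.2) * (z.1 - w.1)).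
  rewrite /c /D; nra.
have D0 : 0 < D.
  have Dge : 0 <= D by rewrite /D addr_ge0 // sqr_ge0.
  rewrite lt_neqAle Dge andbT; apply/eqP => D0.
  move: CS; rewrite -D0 mulr0 => CS.
  have := mulr_gt0 c0 c0; rewrite -expr2; lra.
have [cD|cD] := lerP c D.
  set t := c / D.
  have t0 : 0 < t by rewrite divr_gt0.
  have t1 : t <= 1 by rewrite ler_pdivrMr // mul1r.
  have tt : 0 <= t <= 1 by rewrite (ltW t0) t1.
  have := Hmin _ (vor_convex a p w z t tt Vw Vz).
  rewrite /sqd2 /=.
  have E : forall x1 x2 : R, x1 = c -> x2 = D -> (X.1 - ((1 - t) * w.1 + t * z.1)) ^+ 2 +
      (X.2 - ((1 - t) * w.2 + t * z.2)) ^+ 2 =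
      (X.1 - w.1) ^+ 2 + (X.2 - w.2) ^+ 2 - 2 * t * x1 + t ^+ 2 * x2.
    by move=> x1 x2 -> ->; rewrite /c /D; ring.
  rewrite (E c D) // => H.
  have tD : t * D = c by rewrite /t mulrAC -mulrA divff ?mulr1 // gt_eqF.
  have : t * c <= 0 by nra.
  by rewrite leNgt mulr_gt0.
have := Hmin _ Vz; rewrite /sqd2.
have E : (X.1 - z.1) ^+ 2 + (X.2 - z.2) ^+ 2 =
   (X.1 - w.1) ^+ 2 + (X.2 - w.2) ^+ 2 - 2 * c + D by rewrite /c /D; ring.
rewrite E; lra.
Qed.

Lemma proj_lip {R : realType} (X1 X2 w1 w2 : pt2 R) :
  (X1.1 - w1.1) * (w2.1 - w1.1) + (X1.2 - w1.2) * (w2.2 - w1.2) <= 0 ->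
  (X2.1 - w2.1) * (w1.1 - w2.1) + (X2.2 - w2.2) * (w1.2 - w2.2) <= 0 ->
  sqd2 w1 w2 <= sqd2 X1 X2.
Proof.
move=> h1 h2; rewrite /sqd2.
have := sqr_ge0 ((X1.1 - w1.1) - (X2.1 - w2.1)).
have := sqr_ge0 ((X1.2 - w1.2) - (X2.2 - w2.2)).
nra.
Qed.

Lemma proj_props {R : realType} (a : R) (p : pt2 R) (P : pt3 R -> pt3 R) :
  nearest_proj (prism a p) P -> forall x,
  [/\ pz (P x) = pz x, voronoi a p (hor (P x)) &
     forall u, voronoi a p u -> sqd2 (hor x) (hor (P x)) <= sqd2 (hor x) u].
Proof.
move=> NP x; have [DP Hm] := NP x.
have key : forall u, voronoi a p u ->
    sqd2 (hor x) (hor (P x)) + (pz x - pz (P x)) ^+ 2 <= sqd2 (hor x) u.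
  move=> u Vu; have := Hm (u, pz x) Vu.
  by rewrite /sqd3 /sqd2 /px /py /pz /hor /= subrr expr0n /= addr0.
have Z : pz (P x) = pz x.
  have := key _ DP; rewrite -[X in _ <= X]addr0 lerD2l => h.
  have : (pz x - pz (P x)) ^+ 2 = 0 by apply/le_anti; rewrite h sqr_ge0.
  by move/eqP; rewrite sqrf_eq0 subr_eq0 => /eqP ->.
split => // u Vu; have := key _ Vu; rewrite Z subrr expr0n /= addr0 //.
Qed.


Lemma dist_lat_lb {R : realType} (a : R) (X : pt2 R) :
  has_lbound [set d | exists l, hexlat a l /\ d = Num.sqrt (sqd2 X l)].
Proof. by exists 0 => _ [l [_ ->]]; exact: sqrtr_ge0. Qed.

Lemma dist_lat_le {R : realType} (a : R) (X l : pt2 R) :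
  hexlat a l -> dist_lat a X <= Num.sqrt (sqd2 X l).
Proof.
move=> hl; rewrite /dist_lat; apply: (ge_inf (dist_lat_lb a X)).
by exists l.
Qed.

Lemma dist_lat_ge0 {R : realType} (a : R) (p X : pt2 R) :
  hexlat a p -> 0 <= dist_lat a X.
Proof.
move=> hp; rewrite /dist_lat; apply: lb_le_inf.
  by exists (Num.sqrt (sqd2 X p)), p.
by move=> _ [l [_ ->]]; exact: sqrtr_ge0.
Qed.

Lemma dist_lat_vor {R : realType} (a : R) (p w : pt2 R) :
  hexlat a p -> voronoi a p w -> dist_lat a w = Num.sqrt (sqd2 w p).
Proof.
move=> hp Vw; apply/le_anti; rewrite dist_lat_le //=.
rewrite /dist_lat; apply: lb_le_inf.
  by exists (Num.sqrt (sqd2 w p)), p.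
move=> _ [l [hl ->]]; rewrite ler_sqrt //.
  by apply: Vw.
by rewrite /sqd2 addr_ge0 // sqr_ge0.
Qed.

Lemma cos_le {R : realType} (x y : R) : 0 <= x -> x <= y -> y <= pi ->
  cos y <= cos x.
Proof.
move=> x0 xy ypi.
have [->|xy'] := eqVneq x y; first by [].
have lt : x < y by rewrite lt_neqAle xy' xy.
have pi0 : 0 <= (pi : R) by exact: (le_trans x0 (le_trans xy ypi)).
rewrite ltW // ltr_cos //; rewrite in_itv /= ?x0 ?ypi ?(le_trans x0 xy) //.
by rewrite (le_trans xy ypi).
Qed.

Lemma cos_part {R : realType} (a : R) (p : pt2 R) (P : pt3 R -> pt3 R) (x : pt3 R) :
  0 < a -> 2 * a / Num.sqrt 3 < pi / 2 -> hexlat a p -> nearest_proj (prism a p) P ->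
  cos (dist_lat a (hor (P x))) ^+ 2 <= cos (dist_lat a (hor x)) ^+ 2.
Proof.
move=> a0 api hp NP.
have [_ Vw Hm] := proj_props a p P NP x.
set w := hor (P x) in Vw Hm *; set X := hor x in Hm *.
have Var := variational a p X w Vw Hm.
have [l [hl Hl]] := proj_dist a p X w a0 hp Vw Var.
have dw : dist_lat a w = Num.sqrt (sqd2 w p) by exact: dist_lat_vor a p w hp Vw.
have dX0 : 0 <= dist_lat a X by exact: (dist_lat_ge0 a p X hp).
have dXw : dist_lat a X <= dist_lat a w.
  rewrite dw (le_trans (dist_lat_le a X l hl)) // ler_sqrt //.
  by rewrite /sqd2 addr_ge0 // sqr_ge0.
have r0 : 0 < Num.sqrt 3 :> R by rewrite sqrtr_gt0 ltr0n.
have dwb : dist_lat a w <= 2 * a / Num.sqrt 3.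
  rewrite dw.
  have e : 4 * a ^+ 2 / 3 = (2 * a / Num.sqrt 3) ^+ 2.
    rewrite expr_div_n sqr_sqrtr ?ler0n //; ring.
  rewrite (le_trans (_ : _ <= Num.sqrt (4 * a ^+ 2 / 3))) //.
    by rewrite ler_sqrt ?(vor_bound a p w a0 hp Vw) // divr_ge0 // mulr_ge0 // sqr_ge0.
  rewrite e sqrtr_sqr ger0_norm // divr_ge0 // ?mulr_ge0 // ltW.
all: try by [].
have pih : pi / 2 <= (pi : R) by rewrite ler_pdivrMr // ler_peMr // ?pi_ge0 // ler1n.
have cw : cos (dist_lat a w) <= cos (dist_lat a X).
  apply: cos_le => //; rewrite (le_trans dwb) // (le_trans (ltW api)) //.
have cw0 : 0 <= cos (dist_lat a w).
  apply: cos_ge0_pihalf; rewrite (le_trans dwb) ?(ltW api) // andbT.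
  by rewrite (le_trans _ (le_trans dX0 dXw)) // oppr_le0 divr_ge0 // pi_ge0.
nra.
Qed.

Lemma speed_le {R : realType} (a : R) (p : pt2 R) (P : pt3 R -> pt3 R)
    (g : R -> pt3 R) (t : R) :
  0 < a -> 2 * a / Num.sqrt 3 < pi / 2 -> hexlat a p -> nearest_proj (prism a p) P ->
  cderivable g t -> hspeed a (P \o g) t <= hspeed a g t.
Proof.
move=> a0 api hp NP dg.
rewrite /hspeed (asboolT dg).
case: asboolP => [dP|_]; last exact: sqrtr_ge0.
have Z : (@pz R) \o (P \o g) = (@pz R) \o g.
  by apply/funext => u /=; have [-> _ _] := proj_props a p P NP (g u).
have [dP1 dP2 dP3] := dP; have [dg1 dg2 dg3] := dg.
have H := @deriv_sq_le R ((@px R) \o (P \o g)) ((@py R) \o (P \o g)) ((@px R) \o g) ((@py R) \o g) t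
   dP1 dP2 dg1 dg2.
have C := cos_part a p P (g t) a0 api hp NP.
rewrite ler_sqrt; last first.
  by rewrite /hmetric !addr_ge0 ?sqr_ge0 // mulr_ge0 ?sqr_ge0.
set A1 := 'D_1 ((@px R) \o (P \o g)) t; set A2 := 'D_1 ((@py R) \o (P \o g)) t.
set B1 := 'D_1 ((@px R) \o g) t; set B2 := 'D_1 ((@py R) \o g) t.
set Dz := 'D_1 ((@pz R) \o g) t.
have Dz' : 'D_1 ((@pz R) \o (P \o g)) t = Dz by rewrite Z.
have {}H : A1 ^+ 2 + A2 ^+ 2 <= B1 ^+ 2 + B2 ^+ 2.
  apply: H => u.
  have [_ Vu Hu] := proj_props a p P NP (g u).
  have [_ Vt Ht] := proj_props a p P NP (g t).
  have := @proj_lip R _ _ _ _ (variational a p _ _ Vu Hu _ Vt) (variational a p _ _ Vt Ht _ Vu).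
  by rewrite /sqd2 /px /py /hor /=.
set cw := cos _ in C; set cX := cos _ in C.
have fin : A1 ^+ 2 + A2 ^+ 2 + cw ^+ 2 * 'D_1 ((@pz R) \o (P \o g)) t ^+ 2 <= B1 ^+ 2 + B2 ^+ 2 + cX ^+ 2 * Dz ^+ 2.
  rewrite Dz'; have := sqr_ge0 Dz; nra.
rewrite /hmetric /cderive /px /py /pz /=.
exact: fin.
Qed.

Lemma find_itv {R : realType} (n : nat) (s : nat -> R) (t : R) :
  (forall i, (i < n)%N -> s i < s i.+1) -> s 0%N <= t -> t <= s n ->
  ~ range s t -> exists i, (i < n)%N /\ s i < t < s i.+1.
Proof.
move=> mono h0 hn nr.
have ne : forall k, s k != t.
  by move=> k; apply/eqP => e; apply: nr; exists k.
have claim : forall k, (k <= n)%N -> s k < t \/ exists i, (i < k)%N /\ s i < t < s i.+1.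
  elim=> [_|k IH kn].
    by left; rewrite lt_neqAle ne h0.
  have [lt|[i [ik hi]]] := IH (ltnW kn).
    have [lt'|ge] := ltP t (s k.+1).
      by right; exists k; rewrite ltnSn lt lt'.
    by left; rewrite lt_neqAle ne ge.
  by right; exists i; rewrite ltnS ltnW.
have [lt|//] := claim n (leqnn n).
by move: hn; rewrite leNgt lt.
Qed.

Lemma cder_loc {R : realType} (g c : R -> pt3 R) (al be t : R) :
  al < t < be -> (forall u, al <= u <= be -> c u = g u) -> C1curve g ->
  cderivable c t.
Proof.
move=> ht hcg [dg _].
have nr : \forall u \near t, c u = g u.
  have : t \in `]al, be[ by rewrite in_itv /=.
  move/near_in_itvoo; apply: filter_app; near=> u => /=.
  by rewrite in_itv /= => /andP[h1 h2]; apply: hcg; rewrite (ltW h1) (ltW h2).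
have [d1 d2 d3] := dg t.
have E : forall (f : pt3 R -> R), {near t, f \o g =1 f \o c}.
  by move=> f; near=> u; rewrite /= (near nr u).
split.
- exact: (near_eq_derivable (E _) d1).
- exact: (near_eq_derivable (E _) d2).
- exact: (near_eq_derivable (E _) d3).
Unshelve. all: by end_near. Qed.

Theorem mainTheorem4 (R : realType) (a : R) (p : pt2 R)
  (P : pt3 R -> pt3 R) (gamma : R -> pt3 R) (t0 t1 : R) :
  0 < a ->
  2 * a / Num.sqrt 3 < pi / 2 ->
  hexlat a p ->
  nearest_proj (prism a p) P ->
  t0 <= t1 ->
  piecewise_smooth gamma t0 t1 ->
  (hlength a (P \o gamma) t0 t1 <= hlength a gamma t0 t1)%E.
Proof.
move=> a0 api hp NP t01 [n [s [s0 sn smono sC1]]].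
rewrite /hlength.
have hs0 : forall c t, 0 <= hspeed a c t.
  by move=> c t; rewrite /hspeed; case: ifP => _ //; exact: sqrtr_ge0.
apply: (@int_le_exc R _ (range s)).
- apply: countable_measurable => //.
  exact: sub_countable (card_image_le _ _) (countableP _).
- apply: countable_lebesgue_measure0.
  exact: sub_countable (card_image_le _ _) (countableP _).
- by move=> x _; exact: hs0.
- by move=> x _; exact: hs0.
move=> t Dt Nt.
have /andP[h0 h1] : t0 <= t <= t1 by move: Dt; rewrite /= in_itv.
have hs0t : s 0%N <= t by rewrite s0.
have hsnt : t <= s n by rewrite sn.
have [i [ilt hi]] := find_itv n s t smono hs0t hsnt Nt.
have [g [Cg hg]] := sC1 i ilt.
have dg := cder_loc g gamma (s i) (s i.+1) t hi hg Cg.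
exact: speed_le a p P gamma t a0 api hp NP dg.
Qed.
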